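(* Let $\ell>1$, $m_c\ge0$ with $4m_c^2\ge(3\ell-1)^2$, and $M=\frac{\sqrt{4m_c^2-(1-3\ell)^2}}{2(\ell-1)}$. Then there is a constant $C$ such that for all $z\in[1,\infty)$ $$\int_0^{z-1}\Big|\big((1+z)^2-y^2\big)^{-1/2}F\Big(\tfrac12+iM,\tfrac12+iM;1;\tfrac{(z-1)^2-y^2}{(z+1)^2-y^2}\Big)\Big|\,dy\le C(1+\ln z)^{1-\operatorname{sgn}M}.$$
   Context: $F(a,b;c;\zeta)$ is Gauss's hypergeometric function; $\operatorname{sgn}M=1$ if $M>0$, $0$ if $M=0$. *)

(* Defs.v *)
From Stdlib Require Import Reals Lra.
From Coquelicot Require Import Coquelicot.
Open Scope R_scope.

Fixpoint poch (a : C) (n : nat) : C :=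
  match n with
  | O => RtoC 1
  | S k => Cmult (poch a k) (Cplus a (RtoC (INR k)))
  end.

Definition hyp_term (a b c : C) (x : R) (n : nat) : C :=
  Cmult (Cdiv (Cmult (poch a n) (poch b n)) (Cmult (poch c n) (RtoC (INR (Stdlib.Arith.Factorial.fact n)))))
        (RtoC (x ^ n)).

Definition hyp2F1 (a b c : C) (x : R) : C :=
  (Series (fun n => Re (hyp_term a b c x n)), Series (fun n => Im (hyp_term a b c x n))).

(* sgn M = 1 if M > 0, 0 otherwise (M >= 0 in the application). *)
Definition sgn_nat (M : R) : nat := if Rlt_dec 0 M then 1%nat else 0%nat.

(* Main.v *)
Require Import Defs.
From Stdlib Require Import Reals Lra Lia ZArith.
From Coquelicot Require Import Coquelicot.
Open Scope R_scope.

Definition aa (M : R) : C := (1/2, M).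

Fixpoint cc (M : R) (n : nat) : C :=
  match n with
  | O => RtoC 1
  | S k => Cmult (cc M k) (Cmult (Cmult (Cplus (aa M) (RtoC (INR k))) (Cplus (aa M) (RtoC (INR k))))
                        (RtoC (/ (INR k + 1) ^ 2)))
  end.

Lemma poch_one n : poch (RtoC 1) n = RtoC (INR (Factorial.fact n)).
Proof.
  induction n as [|k IH]; simpl poch. reflexivity.
  rewrite IH. change (Factorial.fact (S k)) with (S k * Factorial.fact k)%nat.
  rewrite mult_INR, S_INR. unfold RtoC, Cmult, Cplus; simpl.
  apply injective_projections; simpl; ring.
Qed.

Lemma poch_sq M n : Cmult (poch (aa M) n) (poch (aa M) n)
  = Cmult (cc M n) (RtoC (INR (Factorial.fact n) ^ 2)).
Proof.
  induction n as [|k IH]; simpl poch; simpl cc.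
  - unfold RtoC, Cmult; simpl; apply injective_projections; simpl; ring.
  - change (Factorial.fact (S k)) with (S k * Factorial.fact k)%nat.
    rewrite mult_INR, S_INR.
    transitivity (Cmult (Cmult (poch (aa M) k) (poch (aa M) k))
      (Cmult (Cplus (aa M) (RtoC (INR k))) (Cplus (aa M) (RtoC (INR k))))).
    { ring. }
    rewrite IH. destruct (cc M k) as [r s].
    assert (0 <= INR k) by apply pos_INR.
    unfold aa, RtoC, Cmult, Cplus; simpl; apply injective_projections; simpl; field; lra.
Qed.

Lemma RtoC_neq0 r : r <> 0 -> RtoC r <> RtoC 0.
Proof. intros H E. apply H. apply (f_equal fst) in E. exact E. Qed.

Lemma hyp_term_eq M x n :
  hyp_term (aa M) (aa M) (RtoC 1) x n = Cmult (cc M n) (RtoC (x ^ n)).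
Proof.
  unfold hyp_term. rewrite poch_sq, poch_one.
  assert (Hf := INR_fact_neq_0 n).
  assert (E : RtoC (INR (Factorial.fact n) ^ 2) = Cmult (RtoC (INR (Factorial.fact n))) (RtoC (INR (Factorial.fact n)))).
  { unfold RtoC, Cmult; apply injective_projections; simpl; ring. }
  rewrite E.
  assert (RtoC (INR (Factorial.fact n)) <> RtoC 0) by (apply RtoC_neq0; auto).
  field. auto.
Qed.

Definition P M n := Cmod (cc M n).

Lemma P_S M n : P M (S n) = P M n * (((INR n + 1/2)^2 + M^2) / (INR n + 1)^2).
Proof.
  unfold P; simpl cc. rewrite !Cmod_mult, Cmod_R.
  assert (0 <= INR n) by apply pos_INR.
  rewrite Rabs_pos_eq. 2:{ apply Rlt_le, Rinv_0_lt_compat. nra. }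
  assert (E : Cmod (Cplus (aa M) (RtoC (INR n))) * Cmod (Cplus (aa M) (RtoC (INR n)))
     = (INR n + 1/2)^2 + M^2).
  { transitivity (Cmod (Cplus (aa M) (RtoC (INR n))) ^ 2). { ring. } change (Cmod (Cplus (aa M) (RtoC (INR n))) ^ 2 = (INR n + 1/2)^2 + M^2). rewrite Cmod2_alt. unfold Re, Im, aa, RtoC, Cplus; simpl. field. }
  rewrite E. unfold Rdiv. simpl pow. reflexivity.
Qed.

Lemma P_nonneg M n : 0 <= P M n.
Proof. apply Cmod_ge_0. Qed.

Lemma ratio_le M (m : R) : 1 <= m ->
  ((m - 1/2)^2 + M^2) * (m+1) / m^3 <= 1 + (1 + 4*M^2) / (m * (m+1)).
Proof.
  intros Hm.
  set (q := 1/4 + M^2).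
  set (D := (1 + 4*M^2) * m^2 - ((q-1)*m^2 + (2*q-1)*m + q)).
  replace (((m - 1/2)^2 + M^2) * (m+1) / m^3) with
     (1 + (1 + 4*M^2) / (m * (m+1)) - D / (m^3 * (m+1))).
  2:{ unfold D, q. field. lra. }
  assert (0 <= D).
  { assert (0 <= q) by (unfold q; nra). assert (0 <= q * ((3*m+1)*(m-1))) by (apply Rmult_le_pos; nra). unfold D. unfold q in *. nra. }
  assert (0 <= D / (m^3 * (m+1))).
  { apply Rdiv_le_0_compat; auto. assert (0 < m^3) by (apply pow_lt; lra). nra. }
  lra.
Qed.

Definition TT M := 1 + 4 * M^2.

Lemma P_bound M n : P M n * (INR n + 1) <= exp (TT M - TT M / (INR n + 1)).
Proof.
  induction n as [|k IH].
  - unfold P; simpl. rewrite Cmod_1. replace (TT M - TT M / (0+1)) with 0 by field.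
    rewrite exp_0. lra.
  - rewrite P_S, S_INR.
    assert (Hk : 0 <= INR k) by apply pos_INR.
    assert (Hr := ratio_le M (INR k + 1) ltac:(lra)).
    replace (INR k + 1 - 1/2) with (INR k + 1/2) in Hr by field.
    assert (E : P M k * (((INR k + 1 / 2) ^ 2 + M ^ 2) / (INR k + 1) ^ 2) * (INR k + 1 + 1)
      = (P M k * (INR k + 1)) * (((INR k + 1/2)^2 + M^2) * (INR k + 1 + 1) / (INR k + 1)^3)).
    { field. lra. }
    rewrite E.
    assert (Hx : 1 + (1 + 4*M^2) / ((INR k + 1) * (INR k + 1 + 1))
                 <= exp (TT M / (INR k + 1) - TT M / (INR k + 1 + 1))).
    { eapply Rle_trans; [|apply exp_ineq1_le]. unfold TT. right. field. lra. }
    replace (TT M - TT M / (INR k + 1 + 1)) with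
      ((TT M - TT M / (INR k + 1)) + (TT M / (INR k + 1) - TT M / (INR k + 1 + 1))) by ring.
    rewrite exp_plus.
    assert (0 <= P M k * (INR k + 1)) by (apply Rmult_le_pos; [apply P_nonneg|lra]).
    assert (0 <= ((INR k + 1/2)^2 + M^2) * (INR k + 1 + 1) / (INR k + 1)^3).
    { apply Rdiv_le_0_compat. nra. apply pow_lt; lra. }
    apply Rmult_le_compat; auto. lra.
Qed.

Lemma exp_le' x y : x <= y -> exp x <= exp y.
Proof. intros [h|h]. apply Rlt_le, exp_increasing; auto. subst; lra. Qed.

Definition AA M := exp (TT M).

Lemma P_le M n : P M n <= AA M / (INR n + 1).
Proof.
  assert (H := P_bound M n). assert (0 <= INR n) by apply pos_INR.
  assert (exp (TT M - TT M / (INR n + 1)) <= AA M).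
  { unfold AA. apply exp_le'. assert (0 < TT M) by (unfold TT; nra).
    assert (0 <= TT M / (INR n + 1)) by (apply Rdiv_le_0_compat; lra). lra. }
  replace (P M n) with (P M n * (INR n + 1) * / (INR n + 1)) by (field; lra).
  apply Rmult_le_compat_r. apply Rlt_le, Rinv_0_lt_compat; lra. lra.
Qed.

Lemma P_le_A M n : P M n <= AA M.
Proof.
  eapply Rle_trans. apply P_le. assert (0 <= INR n) by apply pos_INR.
  assert (0 < AA M) by apply exp_pos.
  unfold Rdiv. rewrite <- (Rmult_1_r (AA M)) at 2. apply Rmult_le_compat_l. lra.
  rewrite <- Rinv_1. apply Rinv_le_contravar; lra.
Qed.


Fixpoint csum (f : nat -> C) (N : nat) : C :=
  match N with O => RtoC 0 | S k => Cplus (csum f k) (f k) end.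

Lemma Re_csum f N : sum_n (fun n => Re (f n)) N = Re (csum f (S N)).
Proof.
  induction N as [|k IH].
  - rewrite sum_O. simpl. unfold Re; simpl. ring.
  - rewrite sum_Sn, IH. unfold plus; simpl. unfold Re; simpl. reflexivity.
Qed.

Lemma Im_csum f N : sum_n (fun n => Im (f n)) N = Im (csum f (S N)).
Proof.
  induction N as [|k IH].
  - rewrite sum_O. simpl. unfold Im; simpl. ring.
  - rewrite sum_Sn, IH. unfold plus; simpl. unfold Im; simpl. reflexivity.
Qed.

Lemma im_le_Cmod' c : Rabs (Im c) <= Cmod c.
Proof.
  destruct c as [u v]. unfold Cmod, Im; simpl.
  rewrite <- sqrt_Rsqr_abs. apply sqrt_le_1. apply Rle_0_sqr. nra. unfold Rsqr. nra.
Qed.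

Lemma series_bound f K : (forall N, Rabs (sum_n f N) <= K) -> Rabs (Series f) <= K.
Proof.
  intros H. unfold Series.
  assert (H1 := Lim_seq_le_loc (sum_n f) (fun _ => K)).
  assert (H2 := Lim_seq_le_loc (fun _ => -K) (sum_n f)).
  rewrite Lim_seq_const in H1, H2.
  assert (E1 : eventually (fun n => sum_n f n <= K)).
  { exists 0%nat. intros n _. specialize (H n). apply Rabs_le_between in H. lra. }
  assert (E2 : eventually (fun n => -K <= sum_n f n)).
  { exists 0%nat. intros n _. specialize (H n). apply Rabs_le_between in H. lra. }
  specialize (H1 E1). specialize (H2 E2).
  destruct (Lim_seq (sum_n f)) as [l| |]; simpl in *; try contradiction.
  apply Rabs_le_between. lra.
Qed.

Lemma Cmod_pair_le u v : Cmod (u, v) <= Rabs u + Rabs v.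
Proof.
  unfold Cmod; simpl. rewrite <- (sqrt_Rsqr (Rabs u + Rabs v)).
  2:{ assert (0 <= Rabs u) by apply Rabs_pos. assert (0 <= Rabs v) by apply Rabs_pos. lra. }
  apply sqrt_le_1. nra. apply Rle_0_sqr.
  unfold Rsqr. assert (0 <= Rabs u) by apply Rabs_pos. assert (0 <= Rabs v) by apply Rabs_pos.
  assert (Rabs u * Rabs u = u * u) by (rewrite <- Rabs_mult; apply Rabs_pos_eq; nra).
  assert (Rabs v * Rabs v = v * v) by (rewrite <- Rabs_mult; apply Rabs_pos_eq; nra).
  nra.
Qed.

Lemma F_bound M x K :
  (forall N, Cmod (csum (fun n => Cmult (cc M n) (RtoC (x ^ n))) N) <= K) ->
  Cmod (hyp2F1 (aa M) (aa M) (RtoC 1) x) <= 2 * K.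
Proof.
  intros H. unfold hyp2F1. eapply Rle_trans. apply Cmod_pair_le.
  assert (Rabs (Series (fun n => Re (hyp_term (aa M) (aa M) (RtoC 1) x n))) <= K).
  { apply series_bound. intros N.
    rewrite (sum_n_ext _ (fun n => Re (Cmult (cc M n) (RtoC (x ^ n))))).
    2:{ intros n. rewrite hyp_term_eq. reflexivity. }
    rewrite Re_csum. eapply Rle_trans. apply re_le_Cmod. apply H. }
  assert (Rabs (Series (fun n => Im (hyp_term (aa M) (aa M) (RtoC 1) x n))) <= K).
  { apply series_bound. intros N.
    rewrite (sum_n_ext _ (fun n => Im (Cmult (cc M n) (RtoC (x ^ n))))).
    2:{ intros n. rewrite hyp_term_eq. reflexivity. }
    rewrite Im_csum. eapply Rle_trans. apply im_le_Cmod'. apply H. }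
  lra.
Qed.

Fixpoint H (n : nat) : R := match n with O => 0 | S k => H k + / (INR k + 1) end.

Lemma H_nonneg n : 0 <= H n.
Proof. induction n; simpl. lra. assert (0 <= INR n) by apply pos_INR.
  assert (0 < / (INR n + 1)) by (apply Rinv_0_lt_compat; lra). lra. Qed.

Lemma H_mono n m : (n <= m)%nat -> H n <= H m.
Proof. induction 1. lra. simpl. assert (0 <= INR m) by apply pos_INR.
  assert (0 < / (INR m + 1)) by (apply Rinv_0_lt_compat; lra). lra. Qed.

Lemma Cmod_term M x n : 0 <= x -> Cmod (Cmult (cc M n) (RtoC (x ^ n))) = P M n * x ^ n.
Proof. intros. rewrite Cmod_mult, Cmod_R, Rabs_pos_eq. reflexivity. apply pow_le; auto. Qed.

Lemma pow_le1 x n : 0 <= x <= 1 -> x ^ n <= 1.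
Proof. intros. induction n; simpl. lra. assert (0 <= x ^ n) by (apply pow_le; lra). nra. Qed.

Lemma crude M x K N : 0 <= x < 1 ->
  Cmod (csum (fun n => Cmult (cc M n) (RtoC (x ^ n))) N)
    <= AA M * (H (Nat.min N K) + (1 - x ^ N) / ((INR K + 1) * (1 - x))).
Proof.
  intros Hx. assert (0 < AA M) by apply exp_pos.
  assert (0 <= INR K) by apply pos_INR.
  assert (HD : 0 < (INR K + 1) * (1 - x)) by nra.
  induction N as [|k IH].
  - simpl. rewrite Cmod_0. replace ((1 - 1) / ((INR K + 1) * (1 - x))) with 0 by (field; lra).
    lra.
  - simpl csum. eapply Rle_trans. apply Cmod_triangle. rewrite Cmod_term by lra.
    assert (0 <= INR k) by apply pos_INR.
    assert (Hp := P_le M k).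
    assert (0 <= x ^ k) by (apply pow_le; lra).
    assert (x ^ k <= 1) by (apply pow_le1; lra).
    assert (T1 : P M k * x ^ k <= AA M / (INR k + 1) * x ^ k) by (apply Rmult_le_compat_r; auto).
    simpl pow.
    assert (E : (1 - x * x ^ k) / ((INR K + 1) * (1 - x)) =
                (1 - x ^ k) / ((INR K + 1) * (1 - x)) + x ^ k / (INR K + 1)) by (field; lra).
    rewrite E.
    destruct (Nat.lt_ge_cases k K) as [hk|hk].
    + rewrite (Nat.min_l (S k) K) by lia. rewrite (Nat.min_l k K) in IH by lia.
      simpl H.
      assert (AA M / (INR k + 1) * x ^ k <= AA M * / (INR k + 1)).
      { unfold Rdiv. rewrite <- (Rmult_1_r (AA M * / (INR k + 1))) at 2.
        apply Rmult_le_compat_l; auto. apply Rmult_le_pos. lra. apply Rlt_le, Rinv_0_lt_compat. lra. }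
      assert (0 <= x ^ k / (INR K + 1)) by (apply Rdiv_le_0_compat; lra).
      assert (0 <= AA M * (x ^ k / (INR K + 1))) by (apply Rmult_le_pos; lra).
      nra.
    + rewrite (Nat.min_r (S k) K) by lia. rewrite (Nat.min_r k K) in IH by lia.
      assert (AA M / (INR k + 1) * x ^ k <= AA M * (x ^ k / (INR K + 1))).
      { unfold Rdiv. rewrite (Rmult_comm (x ^ k)), <- Rmult_assoc. apply Rmult_le_compat_r; auto.
        apply Rmult_le_compat_l. lra. apply Rinv_le_contravar. lra.
        apply le_INR in hk. lra. }
      nra.
Qed.

Definition dd M n : C := Cmult (Cmult (RtoC (INR n)) (cc M n)) (0, - / (2 * M)).
Definition kap M : C := (1/2, (1/4 - M^2) / (2 * M)).

Lemma dd_id M n : M <> 0 ->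
  cc M n = Cplus (Cminus (dd M (S n)) (dd M n)) (Cmult (Cmult (kap M) (cc M n)) (RtoC (/ (INR n + 1)))).
Proof.
  intros HM. unfold dd, kap. simpl cc. rewrite S_INR.
  assert (0 <= INR n) by apply pos_INR.
  destruct (cc M n) as [r s].
  unfold aa, RtoC, Cmult, Cplus, Cminus, Copp; simpl.
  apply injective_projections; simpl; field; lra.
Qed.

Lemma Cmod_im y : Cmod (0, y) = Rabs y.
Proof. unfold Cmod; simpl. rewrite <- sqrt_Rsqr_abs. f_equal. unfold Rsqr. ring. Qed.

Lemma dd_bound M n : 0 < M -> Cmod (dd M n) <= AA M / (2 * M).
Proof.
  intros HM. unfold dd. rewrite !Cmod_mult, Cmod_R, Cmod_im.
  rewrite Rabs_pos_eq by apply pos_INR.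
  rewrite Rabs_Ropp, Rabs_pos_eq by (apply Rlt_le, Rinv_0_lt_compat; lra).
  assert (Hp := P_bound M n). fold (P M n).
  assert (0 <= INR n) by apply pos_INR. assert (0 <= P M n) by apply P_nonneg.
  assert (exp (TT M - TT M / (INR n + 1)) <= AA M).
  { unfold AA. apply exp_le'. assert (0 < TT M) by (unfold TT; nra).
    assert (0 <= TT M / (INR n + 1)) by (apply Rdiv_le_0_compat; lra). lra. }
  unfold Rdiv. apply Rmult_le_compat_r. apply Rlt_le, Rinv_0_lt_compat; lra. nra.
Qed.

Lemma harm2 t : 1 <= t -> / t * / t <= 2 / t - 2 / (t + 1).
Proof.
  intros Ht. replace (2 / t - 2 / (t + 1)) with (/ t * / t + (t - 1) / (t * t * (t + 1))) by (field; lra).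
  assert (0 <= (t - 1) / (t * t * (t + 1))) by (apply Rdiv_le_0_compat; nra). lra.
Qed.

Lemma refined M x N : 0 < M -> 0 <= x < 1 ->
  Cmod (csum (fun n => Cmult (cc M n) (RtoC (x ^ n))) N)
    <= 2 * (AA M / (2 * M)) + 2 * Cmod (kap M) * AA M.
Proof.
  intros HM Hx. set (B := AA M / (2 * M)). set (Ck := Cmod (kap M)).
  set (g := fun n => Cmult (cc M n) (RtoC (x ^ n))).
  assert (HA : 0 < AA M) by apply exp_pos.
  assert (HCk : 0 <= Ck) by apply Cmod_ge_0.
  assert (Claim : forall N, Cmod (Cminus (csum g N) (Cmult (dd M N) (RtoC (x ^ N))))
                  <= B * (1 - x ^ N) + Ck * AA M * (2 - 2 / (INR N + 1))).
  { intros N0; induction N0 as [|k IH].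
    - simpl. unfold dd. simpl.
      replace (Cminus (RtoC 0) (Cmult (Cmult (Cmult (RtoC 0) (RtoC 1)) (0, - / (2 * M))) (RtoC 1))) with (RtoC 0)
        by (unfold RtoC, Cmult, Cminus, Cplus, Copp; apply injective_projections; simpl; ring).
      rewrite Cmod_0. replace (2 - 2 / (0 + 1)) with 0 by field. lra.
    - assert (0 <= INR k) by apply pos_INR.
      assert (Hid := dd_id M k ltac:(lra)).
      assert (E : Cminus (csum g (S k)) (Cmult (dd M (S k)) (RtoC (x ^ S k))) =
        Cplus (Cminus (csum g k) (Cmult (dd M k) (RtoC (x ^ k))))
          (Cplus (Cmult (Cmult (dd M (S k)) (RtoC (x ^ k))) (RtoC (1 - x)))
                 (Cmult (Cmult (Cmult (kap M) (cc M k)) (RtoC (/ (INR k + 1)))) (RtoC (x ^ k))))).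
      { simpl csum. unfold g at 2.
        replace (RtoC (x ^ S k)) with (Cmult (RtoC x) (RtoC (x ^ k)))
          by (unfold RtoC, Cmult; apply injective_projections; simpl; ring).
        replace (RtoC (1 - x)) with (Cminus (RtoC 1) (RtoC x))
          by (unfold RtoC, Cminus, Cplus, Copp; apply injective_projections; simpl; ring).
        rewrite Hid at 1. ring. }
      rewrite E. eapply Rle_trans. apply Cmod_triangle.
      eapply Rle_trans. apply Rplus_le_compat_l. apply Cmod_triangle.
      rewrite !Cmod_mult, !Cmod_R.
      assert (0 <= x ^ k) by (apply pow_le; lra).
      assert (x ^ k <= 1) by (apply pow_le1; lra).
      rewrite (Rabs_pos_eq (x ^ k)), (Rabs_pos_eq (1 - x)), (Rabs_pos_eq (/ (INR k + 1))) by
        (try apply Rlt_le, Rinv_0_lt_compat; lra).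
      fold Ck. fold (P M k).
      assert (Hd := dd_bound M (S k) HM). fold B in Hd.
      assert (Hp := P_le M k).
      assert (0 <= Cmod (dd M (S k))) by apply Cmod_ge_0.
      assert (T1 : Cmod (dd M (S k)) * x ^ k * (1 - x) <= B * x ^ k * (1 - x)).
      { apply Rmult_le_compat_r. lra. apply Rmult_le_compat_r; lra. }
      assert (0 < / (INR k + 1)) by (apply Rinv_0_lt_compat; lra).
      assert (T2 : Ck * P M k * / (INR k + 1) * x ^ k <= Ck * AA M * (/ (INR k + 1) * / (INR k + 1))).
      { assert (0 <= P M k) by apply P_nonneg.
        assert (P M k * x ^ k <= AA M / (INR k + 1)).
        { eapply Rle_trans. apply Rmult_le_compat_r. lra. exact Hp.
          rewrite <- (Rmult_1_r (AA M / (INR k + 1))) at 2. apply Rmult_le_compat_l; auto.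
          apply Rdiv_le_0_compat; lra. }
        unfold Rdiv in *.
        replace (Ck * P M k * / (INR k + 1) * x ^ k) with (Ck * / (INR k + 1) * (P M k * x ^ k)) by ring.
        replace (Ck * AA M * (/ (INR k + 1) * / (INR k + 1))) with (Ck * / (INR k + 1) * (AA M * / (INR k + 1))) by ring.
        apply Rmult_le_compat_l. apply Rmult_le_pos; lra. auto. }
      assert (T3 := harm2 (INR k + 1) ltac:(lra)).
      rewrite S_INR. simpl pow.
      assert (0 <= Ck * AA M) by (apply Rmult_le_pos; lra).
      assert (Ck * AA M * (/ (INR k + 1) * / (INR k + 1)) <= Ck * AA M * (2 / (INR k + 1) - 2 / (INR k + 1 + 1))).
      { apply Rmult_le_compat_l; auto. }
      nra. }
  specialize (Claim N).
  replace (csum g N) with (Cplus (Cminus (csum g N) (Cmult (dd M N) (RtoC (x ^ N)))) (Cmult (dd M N) (RtoC (x ^ N)))) by ring.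
  eapply Rle_trans. apply Cmod_triangle.
  rewrite Cmod_mult, Cmod_R.
  assert (0 <= x ^ N) by (apply pow_le; lra).
  assert (x ^ N <= 1) by (apply pow_le1; lra).
  rewrite Rabs_pos_eq by lra.
  assert (Hd := dd_bound M N HM). fold B in Hd.
  assert (0 <= Cmod (dd M N)) by apply Cmod_ge_0.
  assert (0 <= 2 / (INR N + 1)) by (apply Rdiv_le_0_compat; [lra| assert (0 <= INR N) by apply pos_INR; lra]).
  assert (0 <= Ck * AA M) by (apply Rmult_le_pos; lra).
  assert (0 <= B) by (unfold B; apply Rdiv_le_0_compat; lra).
  nra.
Qed.


Definition ar M n := Re (cc M n).
Definition ai M n := Im (cc M n).

Lemma radius_lt (b : nat -> R) M x : (forall n, Rabs (b n) <= AA M) -> Rabs x < 1 ->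
  Rbar_lt (Rabs x) (CV_radius b).
Proof.
  intros Hb Hx. destruct (CV_radius_bounded b) as [Hub _].
  set (r := (1 + Rabs x) / 2).
  assert (Hr0 : 0 <= r) by (unfold r; assert (0 <= Rabs x) by apply Rabs_pos; lra).
  assert (Hr : Rbar_le r (CV_radius b)).
  { apply Hub. exists (AA M). intros n. rewrite Rabs_mult.
    rewrite <- (Rmult_1_r (AA M)). apply Rmult_le_compat; try apply Rabs_pos. auto.
    rewrite Rabs_pos_eq by (apply pow_le; auto). apply pow_le1. split; [auto| unfold r; lra]. }
  eapply Rbar_lt_le_trans; [|exact Hr]. simpl. unfold r. lra.
Qed.

Lemma ar_bound M n : Rabs (ar M n) <= AA M.
Proof. eapply Rle_trans. apply re_le_Cmod. apply P_le_A. Qed.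
Lemma ai_bound M n : Rabs (ai M n) <= AA M.
Proof. eapply Rle_trans. apply im_le_Cmod'. apply P_le_A. Qed.

Lemma hyp_eq M x : hyp2F1 (aa M) (aa M) (RtoC 1) x = (PSeries (ar M) x, PSeries (ai M) x).
Proof.
  unfold hyp2F1, PSeries. f_equal; apply Series_ext; intros n; rewrite hyp_term_eq;
  unfold ar, ai, Re, Im, RtoC, Cmult; simpl; ring.
Qed.

Lemma cont_PS (b : nat -> R) M x : (forall n, Rabs (b n) <= AA M) -> Rabs x < 1 ->
  continuous (PSeries b) x.
Proof.
  intros. apply (ex_derive_continuous (K:=R_AbsRing) (V:=R_NormedModule)). apply ex_derive_PSeries. eapply radius_lt; eauto.
Qed.

Definition XX z y := ((z - 1) ^ 2 - y ^ 2) / ((z + 1) ^ 2 - y ^ 2).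

Lemma XX_range z y : 1 <= z -> 0 <= y <= z - 1 -> 0 <= XX z y < 1.
Proof.
  intros Hz Hy. unfold XX.
  assert (0 < (z + 1) ^ 2 - y ^ 2) by nra.
  split. apply Rdiv_le_0_compat; nra.
  apply (Rmult_lt_reg_r ((z + 1) ^ 2 - y ^ 2)); auto. unfold Rdiv.
  rewrite Rmult_assoc, Rinv_l by lra. nra.
Qed.

Lemma cont_sq (f : R -> R) y : continuous f y -> continuous (fun t => f t ^ 2) y.
Proof.
  intros H. apply (continuous_comp f (fun t => t ^ 2)); auto.
  apply (ex_derive_continuous (K:=R_AbsRing) (V:=R_NormedModule)). auto_derive. auto.
Qed.

Lemma integrand_cont M z y : 1 <= z -> 0 <= y <= z - 1 ->
  continuous (fun y => / sqrt ((1 + z) ^ 2 - y ^ 2) *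
     sqrt (PSeries (ar M) (XX z y) ^ 2 + PSeries (ai M) (XX z y) ^ 2)) y.
Proof.
  intros Hz Hy.
  assert (HQ : 0 < (1 + z) ^ 2 - y ^ 2) by nra.
  assert (HX := XX_range z y Hz Hy).
  assert (HXa : Rabs (XX z y) < 1) by (rewrite Rabs_pos_eq; lra).
  assert (CX : continuous (XX z) y).
  { apply (ex_derive_continuous (K:=R_AbsRing) (V:=R_NormedModule)). unfold XX. auto_derive. nra. }
  apply (continuous_mult (fun y => / sqrt ((1 + z) ^ 2 - y ^ 2))
          (fun y => sqrt (PSeries (ar M) (XX z y) ^ 2 + PSeries (ai M) (XX z y) ^ 2))).
  - apply (ex_derive_continuous (K:=R_AbsRing) (V:=R_NormedModule)). auto_derive. split. nra. split; auto.
    apply Rgt_not_eq, sqrt_lt_R0. nra.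
  - apply (continuous_comp (fun y => PSeries (ar M) (XX z y) ^ 2 + PSeries (ai M) (XX z y) ^ 2) sqrt).
    + apply (continuous_plus (fun y => PSeries (ar M) (XX z y) ^ 2) (fun y => PSeries (ai M) (XX z y) ^ 2)).
      * apply cont_sq. apply (continuous_comp (XX z) (PSeries (ar M))); auto.
        eapply cont_PS; eauto. apply ar_bound.
      * apply cont_sq. apply (continuous_comp (XX z) (PSeries (ai M))); auto.
        eapply cont_PS; eauto. apply ai_bound.
    + apply continuity_pt_filterlim. apply continuity_pt_sqrt. nra.
Qed.

Lemma integral_bound M z Kc : 1 <= z -> 0 <= Kc ->
  (forall y, 0 <= y <= z - 1 -> Cmod (hyp2F1 (aa M) (aa M) (RtoC 1) (XX z y)) <= Kc) ->
  RInt (fun y => Cmod (Cmult (RtoC (/ sqrt ((1 + z) ^ 2 - y ^ 2)))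
                         (hyp2F1 (aa M) (aa M) (RtoC 1) (((z - 1) ^ 2 - y ^ 2) / ((z + 1) ^ 2 - y ^ 2)))))
       0 (z - 1) <= 2 * Kc.
Proof.
  intros Hz HK HF.
  set (G := fun y => Cmod (Cmult (RtoC (/ sqrt ((1 + z) ^ 2 - y ^ 2)))
                         (hyp2F1 (aa M) (aa M) (RtoC 1) (((z - 1) ^ 2 - y ^ 2) / ((z + 1) ^ 2 - y ^ 2))))).
  set (h := fun y => Kc * / (sqrt (1 + z) * sqrt (1 + z - y))).
  set (Hf := fun y => - 2 * Kc * sqrt (1 + z - y) / sqrt (1 + z)).
  assert (Hs : 0 < sqrt (1 + z)) by (apply sqrt_lt_R0; lra).
  assert (Hmin : Rmin 0 (z - 1) = 0) by (apply Rmin_left; lra).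
  assert (Hmax : Rmax 0 (z - 1) = z - 1) by (apply Rmax_right; lra).
  assert (HG : ex_RInt G 0 (z - 1)).
  { apply (ex_RInt_ext (fun y => / sqrt ((1 + z) ^ 2 - y ^ 2) *
     sqrt (PSeries (ar M) (XX z y) ^ 2 + PSeries (ai M) (XX z y) ^ 2))).
    - intros y Hy. rewrite Hmin, Hmax in Hy. unfold G. rewrite Cmod_mult, Cmod_R.
      rewrite Rabs_pos_eq. 2:{ apply Rlt_le, Rinv_0_lt_compat, sqrt_lt_R0. nra. }
      fold (XX z y). rewrite hyp_eq. reflexivity.
    - apply (ex_RInt_continuous (V:=R_CompleteNormedModule)). intros y Hy. rewrite Hmin, Hmax in Hy.
      apply integrand_cont; auto. }
  assert (Hh : is_RInt h 0 (z - 1) (minus (Hf (z - 1)) (Hf 0))).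
  { apply (is_RInt_derive (V:=R_CompleteNormedModule)).
    - intros y Hy. rewrite Hmin, Hmax in Hy. unfold Hf, h. auto_derive.
      + lra.
      + assert (0 < sqrt (1 + z - y)) by (apply sqrt_lt_R0; lra). assert (E: forall u v w : R, u > 0 -> v > 0 -> -2 * w * (- (1) * / (2 * u)) * / v = w * / (v * u)) by (intros; field; lra). apply E; lra.
    - intros y Hy. rewrite Hmin, Hmax in Hy.
      apply (ex_derive_continuous (K:=R_AbsRing) (V:=R_NormedModule)). unfold h. auto_derive.
      split. lra. split; [|exact I].
      assert (0 < sqrt (1 + z - y)) by (apply sqrt_lt_R0; lra). assert (0 < sqrt (1 + z) * sqrt (1 + z - y)) by nra. intro Habs. change (sqrt (1 + z) * sqrt (1 + z - y) = 0) in Habs. lra. }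
  apply Rle_trans with (RInt h 0 (z - 1)).
  - apply RInt_le; auto. lra. eexists; eauto.
    intros y Hy. unfold G, h. rewrite Cmod_mult, Cmod_R.
    assert (HQ : 0 < (1 + z) ^ 2 - y ^ 2) by nra.
    rewrite Rabs_pos_eq. 2:{ apply Rlt_le, Rinv_0_lt_compat, sqrt_lt_R0. nra. }
    fold (XX z y). assert (HF' := HF y ltac:(lra)).
    assert (0 < sqrt (1 + z - y)) by (apply sqrt_lt_R0; lra).
    assert (Hi : / sqrt ((1 + z) ^ 2 - y ^ 2) <= / (sqrt (1 + z) * sqrt (1 + z - y))).
    { apply Rinv_le_contravar. nra. rewrite <- sqrt_mult by lra. apply sqrt_le_1; nra. }
    assert (0 <= / sqrt ((1 + z) ^ 2 - y ^ 2)) by (apply Rlt_le, Rinv_0_lt_compat, sqrt_lt_R0; nra).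
    assert (0 <= Cmod (hyp2F1 (aa M) (aa M) 1 (XX z y))) by apply Cmod_ge_0.
    rewrite Rmult_comm. apply Rmult_le_compat; auto.
  - rewrite (is_RInt_unique _ _ _ _ Hh). unfold minus, plus, opp; simpl. unfold Hf.
    replace (1 + z - (z - 1)) with 2 by ring. replace (1 + z - 0) with (1 + z) by ring.
    assert (0 <= sqrt 2) by apply sqrt_pos.
    replace (- 2 * Kc * sqrt 2 / sqrt (1 + z) + - (- 2 * Kc * sqrt (1 + z) / sqrt (1 + z)))
      with (2 * Kc - 2 * Kc * sqrt 2 / sqrt (1 + z)) by (field; lra).
    assert (0 <= 2 * Kc * sqrt 2 / sqrt (1 + z)) by (apply Rdiv_le_0_compat; nra). lra.
Qed.


Lemma ln_ineq u : 0 < u -> ln u <= u - 1.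
Proof.
  intros Hu. rewrite <- (ln_exp (u - 1)).
  destruct (exp_ineq1_le (u - 1)) as [h|h].
  - apply Rlt_le, ln_increasing; lra.
  - replace (exp (u - 1)) with u by lra. lra.
Qed.

Lemma H_ln K : (1 <= K)%nat -> H K <= 1 + ln (INR K).
Proof.
  induction 1 as [|m Hm IH].
  - simpl. rewrite ln_1. lra.
  - simpl H. rewrite S_INR.
    assert (1 <= INR m) by (apply le_INR in Hm; simpl in Hm; lra).
    assert (Hl := ln_ineq (INR m / (INR m + 1)) ltac:(apply Rdiv_lt_0_compat; lra)).
    unfold Rdiv in Hl. rewrite ln_mult, ln_Rinv in Hl by (try apply Rinv_0_lt_compat; lra).
    replace (INR m * / (INR m + 1) - 1) with (- / (INR m + 1)) in Hl by (field; lra).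
    lra.
Qed.

Lemma floor_exists z : 1 <= z -> exists K : nat, (1 <= K)%nat /\ INR K <= z < INR K + 1.
Proof.
  intros Hz. destruct (archimed z) as [h1 h2].
  assert (Hu : (1 < up z)%Z) by (apply lt_IZR; lra).
  exists (Z.to_nat (up z - 1)).
  assert (E : INR (Z.to_nat (up z - 1)) = IZR (up z) - 1).
  { rewrite INR_IZR_INZ, Z2Nat.id by lia. rewrite minus_IZR. reflexivity. }
  rewrite E. split; [lia | lra].
Qed.

Lemma crude_F M z y : 1 <= z -> 0 <= y <= z - 1 ->
  Cmod (hyp2F1 (aa M) (aa M) (RtoC 1) (XX z y)) <= 2 * (AA M * (2 + ln z)).
Proof.
  intros Hz Hy. apply F_bound. intros N.
  destruct (floor_exists z Hz) as [K [HK1 [HK2 HK3]]].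
  assert (HX := XX_range z y Hz Hy).
  eapply Rle_trans. apply (crude M (XX z y) K N HX).
  assert (HA : 0 < AA M) by apply exp_pos.
  apply Rmult_le_compat_l. lra.
  assert (HB1 : H (Nat.min N K) <= 1 + ln z).
  { eapply Rle_trans. apply H_mono. apply Nat.le_min_r. eapply Rle_trans. apply H_ln; auto.
    assert (0 < INR K) by (apply lt_0_INR; lia).
    destruct HK2 as [h|h]. apply Rplus_le_compat_l, Rlt_le, ln_increasing; lra. rewrite h. lra. }
  assert (HQ : 0 < (z + 1) ^ 2 - y ^ 2) by nra.
  assert (E : 1 - XX z y = 4 * z / ((z + 1) ^ 2 - y ^ 2)) by (unfold XX; field; lra).
  assert (HD : 1 <= (INR K + 1) * (1 - XX z y)).
  { rewrite E. unfold Rdiv.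
    apply (Rmult_le_reg_r ((z + 1) ^ 2 - y ^ 2)); auto.
    replace ((INR K + 1) * (4 * z * / ((z + 1) ^ 2 - y ^ 2)) * ((z + 1) ^ 2 - y ^ 2))
      with ((INR K + 1) * (4 * z)) by (field; lra).
    assert (0 <= y ^ 2) by (apply pow2_ge_0).
    assert (4 * z * z <= (INR K + 1) * (4 * z)) by (rewrite (Rmult_comm (INR K + 1)); apply Rmult_le_compat_l; lra).
    assert (0 <= (z - 1) * (3 * z + 1)) by (apply Rmult_le_pos; lra).
    replace ((z + 1) ^ 2) with (z * z + 2 * z + 1) by ring.
    lra. }
  assert (0 <= XX z y ^ N) by (apply pow_le; lra).
  assert (XX z y ^ N <= 1) by (apply pow_le1; lra).
  assert (HB2 : (1 - XX z y ^ N) / ((INR K + 1) * (1 - XX z y)) <= 1).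
  { unfold Rdiv. assert (0 < / ((INR K + 1) * (1 - XX z y))) by (apply Rinv_0_lt_compat; lra).
    assert (/ ((INR K + 1) * (1 - XX z y)) <= 1) by (rewrite <- Rinv_1; apply Rinv_le_contravar; lra).
    apply Rle_trans with (1 * 1); [apply Rmult_le_compat; lra | lra]. }
  lra.
Qed.

Theorem lemma3p2 (l mc : R) (hl : 1 < l) (hmc : 0 <= mc)
  (hM : (3 * l - 1) ^ 2 <= 4 * mc ^ 2) :
  let M := sqrt (4 * mc ^ 2 - (1 - 3 * l) ^ 2) / (2 * (l - 1)) in
  let a : C := (1 / 2, M) in
  exists Cst : R, forall z : R, 1 <= z ->
    RInt (fun y => Cmod (Cmult (RtoC (/ sqrt ((1 + z) ^ 2 - y ^ 2)))
                               (hyp2F1 a a (RtoC 1)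
                                  (((z - 1) ^ 2 - y ^ 2) / ((z + 1) ^ 2 - y ^ 2)))))
         0 (z - 1)
    <= Cst * (1 + ln z) ^ (1 - sgn_nat M).
Proof.
  intros M a. change a with (aa M). clearbody M. clear a.
  unfold sgn_nat. destruct (Rlt_dec 0 M) as [HM|HM].
  - exists (2 * (2 * (2 * (AA M / (2 * M)) + 2 * Cmod (kap M) * AA M))).
    intros z Hz. rewrite Nat.sub_diag, pow_O, Rmult_1_r.
    assert (0 < AA M) by apply exp_pos.
    assert (0 <= Cmod (kap M)) by apply Cmod_ge_0.
    assert (0 <= AA M / (2 * M)) by (apply Rdiv_le_0_compat; lra).
    apply integral_bound; auto.
    + assert (0 <= Cmod (kap M) * AA M) by (apply Rmult_le_pos; lra). lra.
    + intros y Hy. apply F_bound. intros N. apply refined; auto.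
      apply XX_range; auto.
  - exists (8 * AA M). intros z Hz. rewrite Nat.sub_0_r, pow_1.
    assert (0 < AA M) by apply exp_pos.
    assert (0 <= ln z).
    { destruct Hz as [h|h]. rewrite <- ln_1. apply Rlt_le, ln_increasing; lra. subst. rewrite ln_1. lra. }
    eapply Rle_trans. apply (integral_bound M z (2 * (AA M * (2 + ln z)))); auto.
    + assert (0 <= AA M * (2 + ln z)) by (apply Rmult_le_pos; lra). lra.
    + intros y Hy. apply crude_F; auto.
    + assert (0 <= AA M * ln z) by (apply Rmult_le_pos; lra).
      replace (2 * (2 * (AA M * (2 + ln z)))) with (8 * AA M + 4 * (AA M * ln z)) by ring.
      replace (8 * AA M * (1 + ln z)) with (8 * AA M + 8 * (AA M * ln z)) by ring. lra.
Qed.
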